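(* Let $(X,\tau)$ be a Hausdorff extended locally convex space having a countable neighborhood base at $0_X$, with finest locally convex topology $\tau_F$, and let $\|\cdot\|$ be a norm on $X$ such that the linear functionals on $X$ continuous with respect to $\|\cdot\|$ are exactly the $\tau$-continuous linear functionals, i.e. $(X,\|\cdot\|)^*=(X,\tau)^*$. Then $\tau_F$ is the topology induced by the norm $\|\cdot\|$.
   Context: An extended seminorm on a vector space $X$ over $\mathbb{R}$ or $\mathbb{C}$ is a map $\rho:X\to[0,\infty]$ with $\rho(\alpha x)=|\alpha|\rho(x)$ and $\rho(x+y)\le\rho(x)+\rho(y)$. An extended locally convex space $(X,\tau)$ is a vector space with the topology induced by a family $\{\rho_i\}$ of extended seminorms (neighborhood base at $x_0$: $\{x:\max_{i\in J}\rho_i(x-x_0)<\varepsilon\}$, $J$ finite, $\varepsilon>0$). A locally convex topology is one induced in this way by finite-valued seminorms. The finest locally convex topology of $(X,\tau)$ is the locally convex topology $\tau_F\subseteq\tau$ such that every locally convex topology $\sigma\subseteq\tau$ on $X$ satisfies $\sigma\subseteq\tau_F$. *)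

(* Defs.v *)
From HB Require Import structures.
From mathcomp Require Import all_boot all_order all_algebra.
From mathcomp Require Import boolp classical_sets cardinality reals constructive_ereal.
From mathcomp Require Export complex.
Set Implicit Arguments. Unset Strict Implicit. Unset Printing Implicit Defensive.
Import Order.TTheory GRing.Theory Num.Theory.
Local Open Scope classical_set_scope.
Local Open Scope ring_scope.

(* Scalars: a field K with an absolute value [sabs : K -> R] into the reals.
   Used with K = R, sabs = normr, and with K = R[i], sabs = complex modulus. *)
Section ELCS.
Context {R : realType} {K : fieldType} (sabs : K -> R) {X : lmodType K}.

Definition ext_seminorm (rho : X -> \bar R) : Prop :=
  [/\ forall x : X, (0 <= rho x)%E,
      forall (a : K) (x : X), rho (a *: x) = ((sabs a)%:E * rho x)%E &
      forall x y : X, (rho (x + y)%R <= rho x + rho y)%E].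

Definition family_topology (I : Type) (rho : I -> X -> \bar R) : set (set X) :=
  [set U : set X | forall x0 : X, U x0 ->
     exists (J : set I) (eps : R), [/\ finite_set J, 0 < eps &
       [set x : X | forall i, J i -> (rho i (x - x0)%R < eps%:E)%E] `<=` U]].

Definition lc_topology (sigma : set (set X)) : Prop :=
  exists (I : Type) (rho : I -> X -> \bar R),
    [/\ forall i, ext_seminorm (rho i),
        forall i x, (rho i x < +oo)%E &
        sigma = family_topology rho].

Definition finest_lc_topology (tau tauF : set (set X)) : Prop :=
  [/\ lc_topology tauF, tauF `<=` tau &
      forall sigma, lc_topology sigma -> sigma `<=` tau -> sigma `<=` tauF].

Definition hausdorff_topology (tau : set (set X)) : Prop :=
  forall x y : X, x <> y ->
    exists U V, [/\ tau U, tau V, U x, V y & U `&` V = set0].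

Definition nbhd_of (tau : set (set X)) (x : X) (N : set X) : Prop :=
  exists U, [/\ tau U, U x & U `<=` N].

Definition countable_nbhd_base_at0 (tau : set (set X)) : Prop :=
  exists B : nat -> set X,
    (forall n, nbhd_of tau 0 (B n)) /\
    (forall N, nbhd_of tau 0 N -> exists n, B n `<=` N).

Definition is_norm (nrm : X -> R) : Prop :=
  [/\ forall x, 0 <= nrm x,
      forall x, nrm x = 0 -> x = 0,
      forall (a : K) x, nrm (a *: x) = sabs a * nrm x &
      forall x y, nrm (x + y) <= nrm x + nrm y].

Definition norm_topology (nrm : X -> R) : set (set X) :=
  [set U : set X | forall x0 : X, U x0 ->
     exists eps : R, 0 < eps /\ [set x | nrm (x - x0) < eps] `<=` U].

Definition linear_functional (f : X -> K) : Prop :=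
  forall (a : K) (x y : X), f (a *: x + y) = a * f x + f y.

Definition continuous_wrt (tau : set (set X)) (f : X -> K) : Prop :=
  forall (x0 : X) (eps : R), 0 < eps ->
    exists U, [/\ tau U, U x0 & forall x, U x -> sabs (f x - f x0) < eps].

End ELCS.

Definition cabs {R : realType} (z : R[i]) : R := ComplexField.Normc.normc z.

(* Main.v *)
Require Import Defs.
From HB Require Import structures.
From mathcomp Require Import all_boot all_order all_algebra.
From mathcomp Require Import boolp classical_sets cardinality reals constructive_ereal.
From mathcomp Require Import complex.
From mathcomp Require Import lra ring.
From mathcomp Require topology normedtype sequences.
Import Order.TTheory GRing.Theory Num.Theory.
Local Open Scope classical_set_scope.
Local Open Scope ring_scope.


Section HBsec.
Variables (R : realType) (V : lmodType R) (q : V -> R).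
Hypotheses (q0 : forall x, 0 <= q x) (qZ : forall (a : R) x, q (a *: x) = `|a| * q x)
  (qD : forall x y, q (x + y) <= q x + q y).

Definition rlin (u : V -> R) := forall (a : R) x y, u (a *: x + y) = a * u x + u y.


Definition Pg (G : set (V * R)) :=
  [/\ (forall x r s, G (x, r) -> G (x, s) -> r = s),
      (forall x y r s (a : R), G (x, r) -> G (y, s) -> G (a *: x + y, a * r + s)) &
      (forall x r, G (x, r) -> r <= q x)].

Lemma qzero : q 0 = 0.
Proof. by rewrite -(scale0r (0 : V)) qZ normr0 mul0r. Qed.

Lemma hahn_banach (x0 : V) : exists u, rlin u /\ (forall x, u x <= q x) /\ u x0 = q x0.
Proof.
pose G0 : set (V * R) := [set p | exists t : R, p = (t *: x0, t * q x0)].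
have PG0 : Pg G0.
  split.
  - move=> x r s [t [-> ->]] [t' [ett' ->]].
    have [->//|ne] := eqVneq t t'.
    have h : (t - t') *: x0 = 0 by rewrite scalerBl ett' subrr.
    have x00 : x0 = 0.
      rewrite -[x0]scale1r -(@mulVf _ (t - t')) ?subr_eq0 //.
      by rewrite -scalerA h scaler0.
    by rewrite x00 qzero !mulr0.
  - move=> x y r s a [t [-> ->]] [t' [-> ->]]; exists (a * t + t').
    by rewrite scalerA scalerDl mulrA mulrDl.
  - by move=> x r [t [-> ->]]; rewrite qZ ler_wpM2r // ler_norm.
pose P' (A : set (V * R)) := Pg (G0 `|` A).
have [A [PA Amax]] : exists A, P' A /\ forall B, A `<` B -> ~ P' B.
  apply: Zorn_bigcup => F FP Ftot.
  have [F0|Fn0] := pselect (F = set0).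
    by rewrite /P' F0 bigcup_set0 setU0.
  have [A0 FA0] : F !=set0 by apply/set0P/eqP.
  have two : forall p1 p2, (G0 `|` \bigcup_(X in F) X) p1 ->
      (G0 `|` \bigcup_(X in F) X) p2 ->
      exists A, [/\ F A, (G0 `|` A) p1 & (G0 `|` A) p2].
    move=> p1 p2 h1 h2.
    have one : forall p, (G0 `|` \bigcup_(X in F) X) p -> exists A, F A /\ (G0 `|` A) p.
      move=> p [g|[X FX Xp]]; first by exists A0; split => //; left.
      by exists X; split => //; right.
    have [X1 [FX1 X1p]] := one _ h1; have [X2 [FX2 X2p]] := one _ h2.
    have [s12|s21] := Ftot _ _ FX1 FX2.
      exists X2; split => //; case: X1p => [g|/s12 ?]; [by left|by right].
    exists X1; split => //; case: X2p => [g|/s21 ?]; [by left|by right].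
  have sub : forall A, F A -> G0 `|` A `<=` G0 `|` \bigcup_(X in F) X.
    by move=> B FB p [g|Bp]; [left|right; exists B].
  split.
  - move=> x r s h1 h2; have [B [FB h1' h2']] := two _ _ h1 h2.
    by have [P1 _ _] := FP _ FB; exact: P1 h1' h2'.
  - move=> x y r s a h1 h2; have [B [FB h1' h2']] := two _ _ h1 h2.
    by have [_ P2 _] := FP _ FB; apply: (sub _ FB); exact: P2.
  - move=> x r h1; have [B [FB h1' _]] := two _ _ h1 h1.
    by have [_ _ P3] := FP _ FB; exact: P3.
pose M := G0 `|` A.
have [P1 P2 P3] := PA; rewrite -/M in P1 P2 P3.
have M00 : M (0, 0) by left; exists 0; rewrite scale0r mul0r.
have Mopp : forall x r, M (x, r) -> M (- x, - r).
  move=> x r h; have := P2 _ _ _ _ (-1) h M00.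
  by rewrite addr0 scaleN1r mulN1r addr0.
have Mscale : forall x r (a : R), M (x, r) -> M (a *: x, a * r).
  move=> x r a h; have := P2 _ _ _ _ a h M00; by rewrite !addr0.
have Madd : forall x y r s, M (x, r) -> M (y, s) -> M (x + y, r + s).
  move=> x y r s h1 h2; have := P2 _ _ _ _ 1 h1 h2; by rewrite scale1r mul1r.
have total : forall y, exists r, M (y, r).
  move=> y; apply: contrapT => /forallNP ny.
  pose S := [set v : R | exists x r, M (x, r) /\ v = r - q (x - y)].
  have S0 : S !=set0 by exists (0 - q (0 - y)), 0, 0.
  have Sub : forall x' r', M (x', r') -> ubound S (q (x' + y) - r').
    move=> x' r' h' v [x [r [h ->]]].
    have h1 := P3 _ _ (Madd _ _ _ _ h h').
    have h2 : q (x + x') <= q (x - y) + q (x' + y).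
      by apply: (le_trans _ (qD _ _)); rewrite addrA addrAC subrK.
    lra.
  have hS : has_sup S by split => //; exists (q (0 + y) - 0); exact: Sub.
  pose c := sup S.
  have cle : forall x' r', M (x', r') -> c <= q (x' + y) - r'.
    by move=> x' r' h'; apply: ge_sup => //; exact: Sub.
  have cge : forall x r, M (x, r) -> r - q (x - y) <= c.
    by move=> x r h; apply: ub_le_sup; [case: hS|exists x, r].
  pose B := [set p | exists x r (t : R), M (x, r) /\ p = (x + t *: y, r + t * c)].
  have MB : M `<=` B by move=> [x r] h; exists x, r, 0; rewrite scale0r mul0r !addr0.
  apply: (Amax B).
    split; first by move=> p Ap; apply: MB; right.
    move=> BA; apply: (ny c); have : B (y, c) by exists 0, 0, 1; rewrite scale1r mul1r !add0r.
    by move=> /BA Ayc; right.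
  rewrite /P'; have -> : G0 `|` B = B.
    by apply/seteqP; split => [p [g|//]|p Bp]; [apply: MB; left|right].
  split.
  - move=> x r s [x1 [r1 [t1 [h1 [ex ->]]]]] [x2 [r2 [t2 [h2 [ex2 ->]]]]].
    have [et|net] := eqVneq t1 t2.
      rewrite -et in ex2; rewrite ex in ex2; move/addIr: ex2 => ex12.
      by rewrite ex12 in h1; rewrite (P1 _ _ _ h1 h2) et.
    exfalso; apply: (ny ((t1 - t2)^-1 * (r2 - r1))).
    have : M ((t1 - t2)^-1 *: (x2 - x1), (t1 - t2)^-1 * (r2 - r1)).
      by apply: Mscale; rewrite addrC [r2 - r1]addrC; apply: Madd => //; exact: Mopp.
    suff -> : (t1 - t2)^-1 *: (x2 - x1) = y by [].
    have e : x2 - x1 = (t1 - t2) *: y.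
      have e0 : x1 + t1 *: y = x2 + t2 *: y by rewrite -ex -ex2.
      rewrite scalerBl; have -> : x2 - x1 = (x2 + t2 *: y) - (x1 + t2 *: y).
        by rewrite opprD addrACA subrr addr0.
      by rewrite -e0 opprD addrACA subrr add0r.
    by rewrite e scalerA mulVf ?scale1r // subr_eq0.
  - move=> x x' r r' a [x1 [r1 [t1 [h1 [-> ->]]]]] [x2 [r2 [t2 [h2 [-> ->]]]]].
    exists (a *: x1 + x2), (a * r1 + r2), (a * t1 + t2); split.
      exact: P2.
    congr pair.
      by rewrite scalerDr scalerA scalerDl addrACA.
    by rewrite mulrDr mulrA mulrDl addrACA.
  - move=> x r [x1 [r1 [t [h1 [-> ->]]]]].
    have [t0|tpos|tneg] := ltgtP 0 t.
    + have h' := Mscale _ _ t^-1 h1.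
      have := cle _ _ h'; rewrite lerBrDr => hh.
      have := ler_wpM2l (ltW t0) hh; rewrite mulrDr mulrA mulfV ?gt_eqF // mul1r.
      have e : t * q (t^-1 *: x1 + y) = q (x1 + t *: y).
        by rewrite -[X in X * _](ger0_norm (ltW t0)) -qZ scalerDr scalerA mulfV ?gt_eqF // scale1r addrC.
      rewrite e; lra.
    + have s0 : 0 < - t by rewrite oppr_gt0.
      have h' := Mscale _ _ (- t)^-1 h1.
      have := cge _ _ h'; rewrite lerBlDr => hh.
      have := ler_wpM2l (ltW s0) hh; rewrite mulrDr mulrA mulfV ?gt_eqF // mul1r.
      have e : - t * q ((- t)^-1 *: x1 - y) = q (x1 + t *: y).
        rewrite -[X in X * _](ger0_norm (ltW s0)) -qZ scalerBr scalerA mulfV ?gt_eqF //.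
        by rewrite scale1r scaleNr opprK.
      rewrite e; lra.
    + by rewrite -tneg scale0r mul0r !addr0; exact: P3.
have [u Mu] := choice total.
exists u; split; [|split].
- move=> a x y; apply: (P1 _ _ _ (Mu _)); apply: P2; exact: Mu.
- by move=> x; apply: P3.
- apply: (P1 _ _ _ (Mu _)); left; exists 1; by rewrite scale1r mul1r.
Qed.

End HBsec.
Arguments rlin {R V}.

Module GHmod.
From mathcomp Require Import topology normedtype sequences.
Import numFieldNormedType.Exports.

Section S.
Variable R : realType.

Lemma lim_bound (s : R ^nat) (a b : R) (N0 : nat) : cvgn s ->
  (forall N, (N0 <= N)%N -> `|s N - a| <= b) -> `|limn s - a| <= b.
Proof.
move=> cs H; rewrite ler_norml; apply/andP; split.
  rewrite lerBrDr; apply: limr_ge => //; exists N0 => // N /= hN.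
  by have := H N hN; rewrite ler_norml => /andP[h _]; lra.
rewrite lerBlDr; apply: limr_le => //; exists N0 => // N /= hN.
by have := H N hN; rewrite ler_norml => /andP[_ h]; lra.
Qed.

Definition c3 (k : nat) : R := (3^-1) ^+ k.

Lemma c3_gt0 k : 0 < c3 k.
Proof. by rewrite /c3 exprn_gt0 // invr_gt0. Qed.

Lemma c3S k : c3 k.+1 * 3 = c3 k.
Proof. by rewrite /c3 exprSr -mulrA mulVf ?mulr1 // pnatr_eq0. Qed.

Lemma c3X k : c3 k * 3 ^+ k = 1.
Proof. by rewrite /c3 -exprMn mulVf ?expr1n // pnatr_eq0. Qed.

Lemma sum_c3 N : \sum_(k < N) c3 k = 3 / 2 * (1 - c3 N).
Proof.
elim: N => [|N IH]; first by rewrite big_ord0 /c3 expr0 subrr mulr0.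
rewrite big_ord_recr /= IH; have := c3S N; lra.
Qed.

Lemma cvg_ser (f : nat -> R) (C : R) : (forall k, `|f k| <= c3 k * C) -> cvgn (series f).
Proof.
move=> H; have C0 : 0 <= C.
  by have := H 0%N; rewrite /c3 expr0 mul1r => /(le_trans (normr_ge0 _)).
apply: (@normed_cvg _ R^o).
apply: (@series_le_cvg _ _ (geometric C (3^-1))).
- by move=> n; rewrite normr_ge0.
- by move=> n; rewrite /geometric /= mulr_ge0 // exprn_ge0 // invr_ge0.
- by move=> n; rewrite /geometric /= mulrC; exact: H.
apply: is_cvg_geometric_series; rewrite ger0_norm ?invr_ge0 // invf_lt1 //; lra.
Qed.

Lemma lim_lin (F G : R ^nat) (a : R) : cvgn F -> cvgn G ->
  limn (fun n => a * F n + G n) = a * limn F + limn G.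
Proof.
move=> cF cG.
apply: cvg_lim => //; apply: cvgD => //; apply: cvgMr => //.
Qed.

End S.

Section GHsec.
Variables (R : realType) (V : lmodType R) (q : V -> R).
Hypotheses (q0 : forall x, 0 <= q x) (qZ : forall (a : R) x, q (a *: x) = `|a| * q x)
  (qD : forall x y, q (x + y) <= q x + q y).

Lemma rlin0 (u : V -> R) : rlin u -> u 0 = 0.
Proof. move=> ul; have h := ul 1 0 0; rewrite scale1r addr0 mul1r in h; lra. Qed.

Lemma rlinN (u : V -> R) x : rlin u -> u (- x) = - u x.
Proof. move=> ul; have := ul (-1) x 0; rewrite addr0 scaleN1r rlin0 // addr0 mulN1r //. Qed.

Lemma gliding_hump (z : nat -> V)
  (Hg : forall u, rlin u -> (forall x, `|u x| <= 2 * q x) -> exists M, forall n, `|u (z n)| <= M)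
  (Hu : forall M, exists n, M <= q (z n)) : False.
Proof.
have hb : forall x0, exists u : V -> R, rlin u /\
    (forall x, `|u x| <= q x) /\ u x0 = q x0.
  move=> x0; have [u [ul [ub ux]]] := @hahn_banach _ _ q q0 qZ qD x0.
  exists u; split => //; split => // x; rewrite ler_norml ub andbT.
  rewrite lerNl -rlinN //; apply: (le_trans (ub _)).
  by rewrite -scaleN1r qZ normrN normr1 mul1r.
have [hbf hbP] := choice hb.
have hM : forall u : V -> R, exists M : R, rlin u -> (forall x, `|u x| <= 2 * q x) ->
    forall n, `|u (z n)| <= M.
  move=> u; have [h|h] := pselect (rlin u /\ (forall x, `|u x| <= 2 * q x)).
    by have [M HM] := Hg u h.1 h.2; exists M.
  by exists 0 => ul ub; exfalso; apply: h.
have [Mbf MbP] := choice hM.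
have [nf nfP] := choice Hu.
pose U k s := hbf (z (nf (2 * 3 ^+ k * (k.+1%:R + s)))).
pose S := fix S (k : nat) : R := if k is k'.+1 then S k' + c3 R k' * Mbf (U k' (S k')) else 0.
pose uk k := U k (S k).
pose nk k := nf (2 * 3 ^+ k * (k.+1%:R + S k)).
have ukl k : rlin (uk k) by case: (hbP (z (nk k))).
have ukb k x : `|uk k x| <= q x by case: (hbP (z (nk k))) => _ [H _]; exact: H.
have uknk k : uk k (z (nk k)) = q (z (nk k)) by case: (hbP (z (nk k))) => _ [_ H]; exact: H.
have ukM k n : `|uk k (z n)| <= Mbf (uk k).
  apply: MbP => // x; apply: (le_trans (ukb k x)); have := q0 x; lra.
have qnk k : 2 * 3 ^+ k * (k.+1%:R + S k) <= q (z (nk k)) by apply: nfP.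
have Sdef j : S j = \sum_(k < j) c3 R k * Mbf (uk k).
  by elim: j => [|j IH]; [rewrite big_ord0|rewrite big_ord_recr /= -IH].
pose F x := series (fun k => c3 R k * uk k x).
have Fb x N : `|F x N| <= \sum_(k < N) c3 R k * q x.
  rewrite /F seriesEord /=; apply: (le_trans (ler_norm_sum _ _ _)).
  apply: ler_sum => k _; rewrite normrM (ger0_norm (ltW (c3_gt0 R k))).
  by rewrite ler_pM2l ?c3_gt0 // ukb.
have Fc x : cvgn (F x).
  apply: (@cvg_ser _ _ (q x)) => k; rewrite normrM (ger0_norm (ltW (c3_gt0 R k))).
  by rewrite ler_pM2l ?c3_gt0 // ukb.
pose w x := limn (F x).
have wl : rlin w.
  move=> a x y; rewrite /w -lim_lin //; congr lim; congr (fun f => f @ \oo).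
  apply/funext => n; rewrite /F !seriesEord /= mulr_sumr -big_split /=.
  by apply: eq_bigr => k _; rewrite ukl; lra.
have wb x : `|w x| <= 2 * q x.
  rewrite -[w x]subr0; apply: (@lim_bound _ _ _ _ 0%N (Fc x)) => N _.
  rewrite subr0; apply: (le_trans (Fb x N)); rewrite -mulr_suml sum_c3.
  have := c3_gt0 R N; have := q0 x; nra.
have [M HM] := Hg w wl wb.
pose j := Num.Def.archi_bound `|M|.
have Mj : M < j%:R by apply: (le_lt_trans (ler_norm M)); exact: archi_boundP.
pose y := z (nk j).
pose A := c3 R j * q y.
have tail : `|w y - F y j.+1| <= A / 2.
  apply: (@lim_bound _ _ _ _ j.+1 (Fc y)) => N hN.
  rewrite /F !seriesEnat /= (big_cat_nat (n := j.+1)) //= addrAC subrr add0r.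
  apply: (le_trans (ler_norm_sum _ _ _)).
  apply: (@le_trans _ _ (\sum_(j.+1 <= k < N) c3 R k * q y)).
    apply: ler_sum => k _; rewrite normrM (ger0_norm (ltW (c3_gt0 R k))).
    by rewrite ler_pM2l ?c3_gt0 // ukb.
  have -> : \sum_(j.+1 <= k < N) c3 R k * q y =
    \sum_(0 <= k < N) c3 R k * q y - \sum_(0 <= k < j.+1) c3 R k * q y.
    by rewrite (big_cat_nat (n := j.+1) (m := 0)) //= addrAC subrr add0r.
  rewrite !big_mkord -!mulr_suml !sum_c3 /A -(c3S R j).
  have := c3_gt0 R N; have := c3_gt0 R j.+1; have := q0 y; nra.
have Fj1 : F y j.+1 = F y j + A.
  by rewrite /F !seriesEord /= big_ord_recr /= /A uknk.
have FSj : `|F y j| <= S j.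
  rewrite Sdef /F seriesEord /=; apply: (le_trans (ler_norm_sum _ _ _)).
  apply: ler_sum => k _; rewrite normrM (ger0_norm (ltW (c3_gt0 R k))).
  by rewrite ler_pM2l ?c3_gt0 // ukM.
have Abig : 2 * (j.+1%:R + S j) <= A.
  have h := qnk j; rewrite /A.
  have := ler_wpM2l (ltW (c3_gt0 R j)) h.
  by rewrite mulrA mulrCA c3X mulr1.
have wM : w y <= M := le_trans (ler_norm _) (HM (nk j)).
move: tail FSj; rewrite Fj1 !ler_norml => /andP[t1 t2] /andP[s1 s2].
have : j.+1%:R = j%:R + 1 :> R by rewrite -natr1.
lra.
Qed.

End GHsec.

End GHmod.
Import GHmod.

Section Realify.
Variables (R : realType) (K : fieldType) (emb : {rmorphism R -> K}) (X : lmodType K).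
Definition RX_ (e : R -> K) : Type := X.
Local Notation RX := (RX_ emb).
HB.instance Definition _ := GRing.Zmodule.on RX.
Definition rscale (r : R) (x : RX) : RX := (emb r *: (x : X)).
Lemma rscaleA a b v : rscale a (rscale b v) = rscale (a * b) v.
Proof. by rewrite /rscale scalerA rmorphM. Qed.
Lemma rscale1 : left_id 1 rscale.
Proof. by move=> v; rewrite /rscale rmorph1 scale1r. Qed.
Lemma rscaleDr : right_distributive rscale +%R.
Proof. by move=> a u v; rewrite /rscale scalerDr. Qed.
Lemma rscaleDl v : {morph rscale^~ v: a b / a + b}.
Proof. by move=> a b; rewrite /rscale rmorphD scalerDl. Qed.
Definition RX_lmodMixin := @GRing.Zmodule_isLmodule.Build R RX rscale rscaleA rscale1 rscaleDr rscaleDl.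
HB.instance Definition _ := RX_lmodMixin.
Lemma RX_scaleE (r : R) (x : RX) : r *: x = (emb r *: (x : X) : X).
Proof. by []. Qed.
End Realify.
Notation RX emb X := (@RX_ _ _ X emb).

Section ComplexConv.
Local Open Scope complex_scope.
Variables (R : realType) (X : lmodType R[i]).
Local Notation emb := (real_complex R).

Lemma complex_conv (q : X -> R) (u : RX emb X -> R) :
  (forall x, 0 <= q x) -> (forall a x, q (a *: x) = cabs a * q x) ->
  rlin u -> (forall x, `|u x| <= 2 * q x) ->
  exists g : X -> R[i], linear_functional g /\ (forall x, cabs (g x) <= 2 * q x) /\
    (forall x, `|u x| <= cabs (g x)).
Proof.
move=> q0 qZ ul ub.
have uZ : forall (r : R) (x y : X), u (r%:C *: x + y) = r * u x + u y.
  by move=> r x y; exact: ul r x y.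
have uD : forall x y : X, u (x + y) = u x + u y.
  by move=> x y; have := uZ 1 x y; rewrite scale1r mul1r.
have uS : forall (r : R) (x : X), u (r%:C *: x) = r * u x.
  have u0 : u 0 = 0 by have := uD 0 0; rewrite addr0; lra.
  by move=> r x; have := uZ r x 0; rewrite addr0 u0 addr0.
have ucplx : forall (a b : R) (x : X), u ((a +i* b) *: x) = a * u x + b * u ('i *: x).
  move=> a b x; have -> : (a +i* b) = a%:C + b%:C * 'i.
    by apply/eqP; rewrite eq_complex /= !mulr0 !mul0r !mulr1 !subr0 !addr0 !add0r !eqxx.
  by rewrite scalerDl -scalerA uD !uS.
pose g (x : X) : R[i] := (u x) +i* (- u ('i *: x)).
have iab : forall (a b : R), 'i * (a +i* b) = (- b) +i* a.
  by move=> a b; apply/eqP; rewrite eq_complex /= !mul0r !mul1r !sub0r !add0r !eqxx.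
exists g; split; [|split].
- move=> [a b] x y; rewrite /g.
  apply/eqP; rewrite eq_complex /=; apply/andP; split; apply/eqP.
    by rewrite uD ucplx; lra.
  rewrite scalerDr scalerA iab uD ucplx.
  lra.
- move=> x.
  pose a := u x; pose b := u ('i *: x).
  have hg : cabs (g x) = Num.sqrt (a ^+ 2 + b ^+ 2).
    by rewrite /cabs /g /= sqrrN.
  have key : a ^+ 2 + b ^+ 2 <= 2 * (cabs (g x) * q x).
    have := ub ((a +i* b) *: x); rewrite ucplx qZ.
    have -> : cabs (a +i* b) = cabs (g x) by rewrite hg /cabs /=.
    rewrite -!expr2 => h; exact: (le_trans (ler_norm _) h).
  have cg0 : 0 <= cabs (g x) by rewrite hg sqrtr_ge0.
  have hsq : cabs (g x) ^+ 2 = a ^+ 2 + b ^+ 2 by rewrite hg sqr_sqrtr // addr_ge0 // sqr_ge0.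
  rewrite -hsq in key.
  have [->|gp] := eqVneq (cabs (g x)) 0; first by rewrite mulr_ge0.
  have gpos : 0 < cabs (g x) by rewrite lt_def gp cg0.
  rewrite -(ler_pM2l gpos) -expr2 mulrCA; exact: key.
- move=> x; rewrite /cabs /g /=.
  rewrite -sqrtr_sqr ler_sqrt ?addr_ge0 ?sqr_ge0 // lerDl sqr_ge0 //.
Qed.

End ComplexConv.

Lemma seq_bound (R : realType) (T : eqType) (s : seq T) (P : T -> R -> Prop) :
  (forall j C C', P j C -> C <= C' -> P j C') ->
  (forall j, j \in s -> exists C, 0 < C /\ P j C) ->
  exists C, 0 < C /\ forall j, j \in s -> P j C.
Proof.
move=> Pm; elim: s => [|a s IH] H; first by exists 1; split.
have [C1 [C10 P1]] := H a (mem_head _ _).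
have [C2 [C20 P2]] : exists C, 0 < C /\ forall j, j \in s -> P j C.
  by apply: IH => j js; apply: H; rewrite in_cons js orbT.
exists (C1 + C2); split; first exact: addr_gt0.
move=> j; rewrite in_cons => /orP[/eqP ->|js].
  by apply: Pm P1 _; rewrite lerDl ltW.
by apply: Pm (P2 _ js) _; rewrite lerDr ltW.
Qed.

Lemma finite_bound (R : realType) (T : Type) (J : set T) (P : T -> R -> Prop) :
  finite_set J ->
  (forall j C C', P j C -> C <= C' -> P j C') ->
  (forall j, J j -> exists C, 0 < C /\ P j C) ->
  exists C, 0 < C /\ forall j, J j -> P j C.
Proof.
move=> fJ Pm H.
have [X eX] := (@finite_fsetP {classic T} J).1 fJ.
have [C [C0 HC]] : exists C, 0 < C /\ forall j, j \in finmap.enum_fset X -> P j C.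
  by apply: (@seq_bound R {classic T}) => // j jX; apply: H; rewrite eX.
by exists C; split => // j Jj; apply: HC; move: Jj; rewrite eX.
Qed.

Lemma eventually_bounded (R : realType) (f : nat -> R) (m : nat) (B : R) :
  (forall n, (m <= n)%N -> `|f n| <= B) -> exists M, forall n, `|f n| <= M.
Proof.
move=> H; exists (`|B| + \sum_(k < m) `|f k|) => n.
have [mn|nm] := leqP m n.
  apply: (le_trans (H n mn)); apply: (le_trans (ler_norm B)).
  by rewrite lerDl sumr_ge0.
by rewrite (bigD1 (Ordinal nm)) //= addrCA lerDl addr_ge0 // sumr_ge0.
Qed.

Lemma fin_ext (R : realType) (v : \bar R) : (0 <= v)%E -> (v < +oo)%E -> v = (fine v)%:E.
Proof. by case: v. Qed.
Arguments fin_ext {R v}.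

Section Main.
Variables (R : realType) (K : fieldType) (sabs : K -> R) (emb : {rmorphism R -> K}).
Hypotheses (Hemb : forall r, sabs (emb r) = `|r|)
  (HsM : forall a b, sabs (a * b) = sabs a * sabs b)
  (Hconv : forall (X : lmodType K) (q : X -> R) (u : RX emb X -> R),
     (forall x, 0 <= q x) -> (forall a x, q (a *: x) = sabs a * q x) ->
     rlin u -> (forall x, `|u x| <= 2 * q x) ->
     exists g : X -> K, linear_functional g /\ (forall x, sabs (g x) <= 2 * q x) /\
       (forall x, `|u x| <= sabs (g x))).

Lemma sabs0 : sabs 0 = 0.
Proof. by rewrite -(rmorph0 emb) Hemb normr0. Qed.


Section X.
Variable (X : lmodType K).

Lemma lf0 (g : X -> K) : linear_functional g -> g 0 = 0.
Proof.
move=> h; have e := h 1 0 0; rewrite scale1r addr0 mul1r in e.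
by apply: (@addrI _ (g 0)); rewrite addr0 -e.
Qed.

Lemma lfB (g : X -> K) x y : linear_functional g -> g (x - y) = g x - g y.
Proof.
move=> h; have := h (-1) y x; rewrite scaleN1r mulN1r => e.
by rewrite [x - y]addrC e addrC.
Qed.

Lemma lfZ (g : X -> K) a x : linear_functional g -> g (a *: x) = a * g x.
Proof. by move=> h; have := h a x 0; rewrite addr0 lf0 // addr0. Qed.

Lemma cont_mono (T T' : set (set X)) (g : X -> K) :
  T `<=` T' -> continuous_wrt sabs T g -> continuous_wrt sabs T' g.
Proof.
move=> TT' cg x0 eps e0; have [U [TU Ux0 HU]] := cg x0 eps e0.
by exists U; split => //; apply: TT'.
Qed.

Lemma cont_of_bound (T : set (set X)) (p : X -> R) (C : R) (g : X -> K) :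
  0 < C -> linear_functional g -> p 0 = 0 ->
  (forall x0 r, 0 < r -> T [set x | p (x - x0) < r]) ->
  (forall x, sabs (g x) <= C * p x) -> continuous_wrt sabs T g.
Proof.
move=> C0 gl p0 Hopen gb x0 eps e0.
exists [set x | p (x - x0) < eps / C]; split.
- by apply: Hopen; exact: divr_gt0.
- by rewrite /= subrr p0 divr_gt0.
- move=> x /= hx; rewrite -lfB //; apply: (le_lt_trans (gb _)).
  have := hx; rewrite -(ltr_pM2l C0) mulrCA mulfV ?gt_eqF // mulr1 //.
Qed.

Lemma norm_ball_open (p : X -> R) : (forall x y, p (x + y) <= p x + p y) ->
  forall x0 r, norm_topology p [set x | p (x - x0) < r].
Proof.
move=> pD x0 r x1 /= h1; exists (r - p (x1 - x0)); split; first by rewrite subr_gt0.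
move=> x /= hx; have := pD (x - x1) (x1 - x0); rewrite addrA subrK; lra.
Qed.

Lemma fam_ball_open (I' : Type) (sig : I' -> X -> \bar R) j (s : X -> R) :
  (forall x, sig j x = (s x)%:E) -> (forall x y, s (x + y) <= s x + s y) ->
  forall x0 r, family_topology sig [set x | s (x - x0) < r].
Proof.
move=> sE sD x0 r x1 /= h1; exists [set j], (r - s (x1 - x0)); split.
- exact: finite_set1.
- by rewrite subr_gt0.
move=> x /= hx; have := hx j erefl; rewrite sE lte_fin => hx'.
have := sD (x - x1) (x1 - x0); rewrite addrA subrK; lra.
Qed.

Lemma mul_lt_div (k v e : R) : 0 < k -> v < e / k -> k * v < e.
Proof. by move=> k0 h; rewrite -(ltr_pM2l k0) mulrCA mulfV ?gt_eqF // mulr1 in h. Qed.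

Lemma archi_nat (M : R) : exists n : nat, M <= n.+1%:R.
Proof.
exists (Num.Def.archi_bound `|M|); apply: (le_trans (ler_norm M)).
apply: ltW; apply: (lt_le_trans (archi_boundP (normr_ge0 M))).
by rewrite ler_nat.
Qed.

Section Thm.
Variables (I : Type) (rho : I -> X -> \bar R) (tauF : set (set X)) (nrm : X -> R).
Hypotheses (Hrho : forall i, ext_seminorm sabs (rho i))
  (Hbase : countable_nbhd_base_at0 (family_topology rho))
  (Hfin : finest_lc_topology sabs (family_topology rho) tauF)
  (Hn : is_norm sabs nrm)
  (Hdual : forall f : X -> K, linear_functional f ->
     (continuous_wrt sabs (norm_topology nrm) f <->
      continuous_wrt sabs (family_topology rho) f)).

Let nrm0 x : 0 <= nrm x. Proof. by case: Hn => h _ _ _; exact: h. Qed.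
Let nrmZ a x : nrm (a *: x) = sabs a * nrm x. Proof. by case: Hn => _ _ h _; exact: h. Qed.
Let nrmD x y : nrm (x + y) <= nrm x + nrm y. Proof. by case: Hn => _ _ _ h; exact: h. Qed.
Let nrm_eq0 x : nrm x = 0 -> x = 0. Proof. by case: Hn => _ h _ _; exact: h. Qed.
Let nrm00 : nrm 0 = 0.
Proof. by rewrite -(scale0r (0 : X)) nrmZ sabs0 mul0r. Qed.
Let nrmE r x : nrm (emb r *: x) = `|r| * nrm x.
Proof. by rewrite nrmZ Hemb. Qed.

Let qZR (q : X -> R) : (forall a x, q (a *: x) = sabs a * q x) ->
  forall (a : R) (x : RX emb X), q (a *: x) = `|a| * q x.
Proof. by move=> qZ a x; rewrite RX_scaleE qZ Hemb. Qed.

Lemma nrm_cont : exists J δ, [/\ finite_set J, 0 < δ &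
  forall x, (forall i, J i -> (rho i x < δ%:E)%E) -> nrm x < 1].
Proof.
case: Hbase => B [HB1 HB2].
have hb m : exists p : set I * R, [/\ finite_set p.1, 0 < p.2 &
    [set x | forall i, p.1 i -> (rho i (x - 0) < p.2%:E)%E] `<=` B m].
  case: (HB1 m) => U [TU U0 UB]; case: (TU 0 U0) => J [e [fJ e0 sub]].
  by exists (J, e); split => //; exact: subset_trans sub UB.
have [pm Hpm] := choice hb.
pose Jm m := (pm m).1; pose em m := (pm m).2.
pose Jc := fix Jc n := if n is n'.+1 then Jc n' `|` Jm n else Jm 0%N.
pose ec := fix ec n := if n is n'.+1 then Order.min (ec n') (em n) else em 0%N.
have fJc n : finite_set (Jc n).
  elim: n => [|n IH] /=; first by case: (Hpm 0%N).
  by rewrite finite_setU; split => //; case: (Hpm n.+1).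
have ec0 n : 0 < ec n.
  elim: n => [|n IH] /=; first by case: (Hpm 0%N).
  by rewrite lt_min IH /=; case: (Hpm n.+1).
have mono n m : (m <= n)%N -> Jm m `<=` Jc n /\ ec n <= em m.
  elim: n => [|n IH] in m *.
    by rewrite leqn0 => /eqP ->; split.
  rewrite leq_eqVlt => /orP[/eqP ->|lt].
    by split; [move=> i Ji; right|rewrite /= ge_min lexx orbT].
  have [h1 h2] := IH m lt.
  by split; [move=> i /h1 ?; left|rewrite /= ge_min h2].
apply: contrapT => nA.
have H n : exists x, (forall i, Jc n i -> (rho i x < (ec n / n.+1%:R)%:E)%E) /\ 1 <= nrm x.
  apply: contrapT => nx; apply: nA; exists (Jc n), (ec n / n.+1%:R); split => //.
    by rewrite divr_gt0.
  by move=> x hx; rewrite ltNge; apply/negP => h; apply: nx; exists x.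
have [xs Hxs] := choice H.
pose y n := emb (n.+1%:R) *: xs n.
have rhoy n i : Jc n i -> (rho i (y n) < (ec n)%:E)%E.
  move=> Ji; have [r0 rZ _] := Hrho i; rewrite /y rZ Hemb.
  have hx := (Hxs n).1 i Ji.
  have e := fin_ext (r0 _) (lt_trans hx (ltry _)); rewrite e in hx *.
  by rewrite -EFinM lte_fin ger0_norm // mul_lt_div.
have nrmy n : n.+1%:R <= nrm (y n).
  rewrite /y nrmE ger0_norm // -{1}[n.+1%:R]mulr1 ler_wpM2l //; exact: (Hxs n).2.
apply: (@gliding_hump R (RX emb X) nrm nrm0 (@qZR nrm nrmZ) nrmD y).
  move=> u ul ub; have [g [gl [gb gu]]] := @Hconv X nrm u nrm0 nrmZ ul ub.
  have gN : continuous_wrt sabs (norm_topology nrm) g.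
    apply: (@cont_of_bound _ nrm 2) => //.
    by move=> x0 r _; apply: norm_ball_open.
  have [U [TU U0 HU]] := (Hdual g gl).1 gN 0 1 ltr01.
  have [m Bm] := HB2 U (ex_intro _ U (And3 TU U0 (@subset_refl _ U))).
  apply: (@eventually_bounded R _ m 1) => n mn.
  have : U (y n).
    apply: Bm; case: (Hpm m) => _ _ sb; apply: sb => i Ji; rewrite subr0.
    have [h1 h2] := mono n m mn.
    by apply: (lt_le_trans (rhoy n i (h1 i Ji))); rewrite lee_fin.
  move=> /HU; rewrite lf0 // subr0 => h.
  exact: (le_trans (gu _) (ltW h)).
move=> M; have [n hn] := archi_nat M; exists n; exact: le_trans hn (nrmy n).
Qed.

Lemma norm_sub : norm_topology nrm `<=` family_topology rho.
Proof.
move=> U hU x0 Ux0.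
have [J [δ [fJ δ0 HJ]]] := nrm_cont.
have [eps [e0 sub]] := hU x0 Ux0.
exists J, (δ * eps); split => //; first by rewrite mulr_gt0.
move=> x hx; apply: sub => /=.
have ie0 : 0 < eps^-1 by rewrite invr_gt0.
have := HJ (emb (eps^-1) *: (x - x0)).
rewrite nrmE ger0_norm ?ltW // => h.
have : eps^-1 * nrm (x - x0) < 1.
  apply: h => i Ji; have [r0 rZ _] := Hrho i; rewrite rZ Hemb.
  have hx' := hx i Ji.
  have e := fin_ext (r0 _) (lt_trans hx' (ltry _)); rewrite e in hx' *.
  rewrite -EFinM lte_fin ger0_norm ?ltW //; rewrite lte_fin in hx'.
  by rewrite -(ltr_pM2l e0) mulrA mulfV ?gt_eqF // mul1r mulrC.
by move=> h2; rewrite -(ltr_pM2l ie0) mulVf ?gt_eqF.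
Qed.

Lemma norm_lc : lc_topology sabs (norm_topology nrm).
Proof.
exists unit, (fun _ x => (nrm x)%:E); split.
- move=> _; split.
  + by move=> x; rewrite lee_fin.
  + by move=> a x; rewrite nrmZ EFinM.
  + by move=> x y; rewrite lee_fin.
- by move=> _ x; exact: ltry.
apply/seteqP; split => U hU x0 Ux0.
  have [eps [e0 sub]] := hU x0 Ux0.
  exists [set tt], eps; split => //.
  by move=> x hx; apply: sub; have := hx tt erefl; rewrite lte_fin.
have [J [eps [fJ e0 sub]]] := hU x0 Ux0.
by exists eps; split => // x hx; apply: sub => i _; rewrite lte_fin.
Qed.

Lemma tauF_sub : tauF `<=` norm_topology nrm.
Proof.
case: Hfin => -[I' [sig [sigS sigF Esig]]] FT Fmax.
have bound j : exists C, 0 < C /\ forall y, fine (sig j y) <= C * nrm y.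
  pose s y := fine (sig j y).
  have [r0 rZ rD] := sigS j.
  have sE y : sig j y = (s y)%:E by exact: fin_ext (r0 _) (sigF j y).
  have s0 y : 0 <= s y by have := r0 y; rewrite sE lee_fin.
  have sZ a y : s (a *: y) = sabs a * s y.
    by have := rZ a y; rewrite !sE -EFinM => -[].
  have sD x y : s (x + y) <= s x + s y.
    by have := rD x y; rewrite !sE -EFinD lee_fin.
  have s00 : s 0 = 0 by rewrite -(scale0r (0 : X)) sZ sabs0 mul0r.
  apply: contrapT => nB.
  have H n : exists y, n.+1%:R * nrm y < s y.
    apply: contrapT => ny; apply: nB; exists n.+1%:R; split => // y.
    by rewrite leNgt; apply/negP => h; apply: ny; exists y.
  have [ys Hys] := choice H.
  have ysp n : 0 < nrm (ys n).
    rewrite lt_def nrm0 andbT; apply/eqP => h0.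
    have := Hys n; rewrite h0 mulr0 (nrm_eq0 _ h0) s00 ltxx //.
  pose z n := emb ((nrm (ys n))^-1) *: ys n.
  have nz n : nrm (z n) = 1.
    by rewrite /z nrmE ger0_norm ?invr_ge0 ?nrm0 // mulVf ?gt_eqF.
  have sz n : n.+1%:R <= s (z n).
    rewrite /z sZ Hemb ger0_norm ?invr_ge0 ?nrm0 //.
    have ip : 0 < (nrm (ys n))^-1 by rewrite invr_gt0.
    have := Hys n; rewrite -(ltr_pM2l ip) mulrCA mulVf ?gt_eqF ?ysp // mulr1.
    by move/ltW.
  apply: (@gliding_hump R (RX emb X) s s0 (@qZR s sZ) sD z).
    move=> u ul ub; have [g [gl [gb gu]]] := @Hconv X s u s0 sZ ul ub.
    have gT : continuous_wrt sabs (family_topology rho) g.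
      apply: (cont_mono _ _ _ FT); apply: (@cont_of_bound _ s 2) => //.
      by move=> x0 r _; rewrite Esig; apply: (fam_ball_open _ _ _ _ sE sD).
    have [U [NU U0 HU]] := (Hdual g gl).2 gT 0 1 ltr01.
    have [δ [δ0 sub]] := NU 0 U0.
    exists (2 / δ) => n.
    have d2 : 0 < δ / 2 by rewrite divr_gt0.
    have : U (emb (δ / 2) *: z n).
      apply: sub; rewrite /= subr0 nrmE nz mulr1 (ger0_norm (ltW d2)).
      lra.
    move=> /HU; rewrite lf0 // subr0 lfZ // HsM Hemb (ger0_norm (ltW d2)) => h.
    have hg : sabs (g (z n)) < 2 / δ.
      rewrite -(ltr_pM2l d2); apply: (lt_le_trans h).
      have -> : δ / 2 * (2 / δ) = 1 by field; rewrite gt_eqF.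
      by [].
    exact: le_trans (gu _) (ltW hg).
  move=> M; have [n hn] := archi_nat M; exists n; exact: le_trans hn (sz n).
move=> U; rewrite {1}Esig => hU x0 Ux0.
have [J [eps [fJ e0 sub]]] := hU x0 Ux0.
have [C [C0 HC]] := @finite_bound R I' J (fun j C => forall y, fine (sig j y) <= C * nrm y) fJ
  (fun j C C' h CC' y => le_trans (h y) (ler_wpM2r (nrm0 y) CC'))
  (fun j _ => bound j).
exists (eps / C); split; first exact: divr_gt0.
move=> x hx; apply: sub => j Jj.
have [r0 _ _] := sigS j; rewrite (fin_ext (r0 _) (sigF j _)) lte_fin.
apply: (le_lt_trans (HC j Jj _)); rewrite mulrC -ltr_pdivlMr //.
Qed.

Theorem main_thm : tauF = norm_topology nrm.
Proof.
apply/seteqP; split; first exact: tauF_sub.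
case: Hfin => _ _ Fmax; apply: Fmax; first exact: norm_lc.
exact: norm_sub.
Qed.

End Thm.

End X.
End Main.

Theorem theorem5p16 (R : realType) :
  (* real scalars *)
  (forall (X : lmodType R) (I : Type) (rho : I -> X -> \bar R)
          (tauF : set (set X)) (nrm : X -> R),
     (forall i, ext_seminorm Num.norm (rho i)) ->
     hausdorff_topology (family_topology rho) ->
     countable_nbhd_base_at0 (family_topology rho) ->
     finest_lc_topology Num.norm (family_topology rho) tauF ->
     is_norm Num.norm nrm ->
     (forall f : X -> R, linear_functional f ->
        (continuous_wrt Num.norm (norm_topology nrm) f <->
         continuous_wrt Num.norm (family_topology rho) f)) ->
     tauF = norm_topology nrm)
  /\
  (* complex scalars *)
  (forall (X : lmodType R[i]) (I : Type) (rho : I -> X -> \bar R)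
          (tauF : set (set X)) (nrm : X -> R),
     (forall i, ext_seminorm cabs (rho i)) ->
     hausdorff_topology (family_topology rho) ->
     countable_nbhd_base_at0 (family_topology rho) ->
     finest_lc_topology cabs (family_topology rho) tauF ->
     is_norm cabs nrm ->
     (forall f : X -> R[i], linear_functional f ->
        (continuous_wrt cabs (norm_topology nrm) f <->
         continuous_wrt cabs (family_topology rho) f)) ->
     tauF = norm_topology nrm).
Proof.
split.
- move=> X I rho tauF nrm Hrho _ Hb Hf Hn Hd.
  apply: (@main_thm R R Num.norm idfun) => //.
  + by move=> a b; rewrite normrM.
  + move=> Y q u q0 qZ ul ub; exists u.
    split; first by move=> a x y; exact: (ul a x y).
    by split.
- move=> X I rho tauF nrm Hrho _ Hb Hf Hn Hd.
  apply: (@main_thm R R[i] cabs (real_complex R)) => //.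
  + by move=> r; rewrite /cabs /= expr0n /= addr0 sqrtr_sqr.
  + by move=> a b; exact: ComplexField.Normc.normcM.
  + by move=> Y q u q0 qZ ul ub; exact: complex_conv.
Qed.
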